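(* Let $L>0$ and let $X_1,\dots,X_t$ be independent nonnegative discrete random variables, each of which takes value either $0$ or a value at least $L$. If $\sum_{j=1}^t\mathbb{E}[X_j]\ge L$, then $\mathbb{E}[\max_j X_j]\ge L/2$. *)

(* Defs.v *)
From Stdlib Require Import Reals Lra List.
Open Scope R_scope.

(* A discrete probability space: countable sample space nat with mass p.
   (The joint law of finitely many discrete random variables is supported on
   a countable set, so this is without loss of generality.) *)
Definition is_pmf (p : nat -> R) : Prop :=
  (forall n, 0 <= p n) /\ infinite_sum p 1.

(* Extended nonnegative reals [0, +oo] for expectations. *)
Inductive ereal := EFin (r : R) | EInf.

Definition ele (c : R) (e : ereal) : Prop :=
  match e with EFin r => c <= r | EInf => True end.

Definition eadd (a b : ereal) : ereal :=
  match a, b with EFin x, EFin y => EFin (x + y) | _, _ => EInf end.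

Definition is_expect (p : nat -> R) (Y : nat -> R) (e : ereal) : Prop :=
  match e with
  | EFin r => infinite_sum (fun n => p n * Y n) r
  | EInf => forall M, exists N, M < sum_f_R0 (fun n => p n * Y n) N
  end.

Definition is_prob (p : nat -> R) (A : nat -> bool) (r : R) : Prop :=
  infinite_sum (fun n => if A n then p n else 0) r.

Definition eqRb (x y : R) : bool := if Req_EM_T x y then true else false.

Definition independent (p : nat -> R) (t : nat) (X : nat -> nat -> R) : Prop :=
  forall (a : nat -> R) (r : R) (rs : nat -> R),
    is_prob p (fun n => forallb (fun j => eqRb (X j n) (a j)) (seq 0 t)) r ->
    (forall j, (j < t)%nat -> is_prob p (fun n => eqRb (X j n) (a j)) (rs j)) ->
    r = fold_right Rmult 1 (map rs (seq 0 t)).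

(* max_{j<t} X_j (pointwise); the base 0 is harmless as the X_j are a.s. >= 0
   and t >= 1 under the hypotheses. *)
Definition maxX (t : nat) (X : nat -> nat -> R) (n : nat) : R :=
  fold_right Rmax 0 (map (fun j => X j n) (seq 0 t)).

Definition esum (t : nat) (E : nat -> ereal) : ereal :=
  fold_right eadd (EFin 0) (map E (seq 0 t)).

(* Main.v *)
Require Import Defs.
From Stdlib Require Import Reals Lra Lia List Classical ClassicalEpsilon.
Open Scope R_scope.

Lemma is_ext f g l : (forall n, f n = g n) -> infinite_sum f l -> infinite_sum g l.
Proof.
  intros H Hf eps He; destruct (Hf eps He) as [N HN]; exists N; intros n Hn.
  rewrite <- (sum_eq f g n) by (intros; apply H). now apply HN.
Qed.

Lemma is_plus f g a b : infinite_sum f a -> infinite_sum g b ->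
  infinite_sum (fun n => f n + g n) (a + b).
Proof.
  intros Hf Hg. assert (H := CV_plus _ _ _ _ Hf Hg).
  intros eps He; destruct (H eps He) as [N HN]; exists N; intros n Hn.
  rewrite sum_plus. now apply HN.
Qed.

Lemma is_zero : infinite_sum (fun _ => 0) 0.
Proof.
  intros eps He; exists 0%nat; intros n _.
  replace (sum_f_R0 (fun _ => 0) n) with 0.
  - unfold Rdist; rewrite Rminus_0_r, Rabs_R0; lra.
  - induction n; simpl; lra.
Qed.

Lemma is_scal f a c : infinite_sum f a -> infinite_sum (fun n => c * f n) (c * a).
Proof.
  intros Hf. assert (Hc : Un_cv (fun _ => c) c).
  { intros eps He; exists 0%nat; intros; unfold Rdist; rewrite Rminus_diag, Rabs_R0; lra. }
  assert (H := CV_mult _ _ _ _ Hc Hf).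
  intros eps He; destruct (H eps He) as [N HN]; exists N; intros n Hn.
  replace (sum_f_R0 (fun n => c * f n) n) with (c * sum_f_R0 f n).
  - now apply HN.
  - rewrite scal_sum. apply sum_eq; intros; ring.
Qed.

Lemma is_le f g a b : (forall n, f n <= g n) -> infinite_sum f a -> infinite_sum g b -> a <= b.
Proof.
  intros H Hf Hg. apply (@Rle_cv_lim (sum_f_R0 f) (sum_f_R0 g) a b); [intro N; apply sum_Rle; intros; apply H|exact Hf|exact Hg].
Qed.

Lemma is_comp f g b : (forall n, 0 <= f n <= g n) -> infinite_sum g b -> exists a, infinite_sum f a.
Proof.
  intros H Hg. destruct (Rseries_CV_comp f g H (exist _ b Hg)) as [a Ha]. now exists a.
Qed.

Lemma is_partial f N a : (forall n, 0 <= f n) -> infinite_sum f a -> sum_f_R0 f N <= a.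
Proof. intros H Hf. now apply sum_incr. Qed.

Lemma is_list {A} (l : list A) (h : A -> nat -> R) (s : A -> R) :
  (forall a, In a l -> infinite_sum (h a) (s a)) ->
  infinite_sum (fun n => fold_right (fun a acc => h a n + acc) 0 l)
               (fold_right (fun a acc => s a + acc) 0 l).
Proof.
  induction l as [|x l IH]; intros H; simpl.
  - apply is_zero.
  - apply is_plus; [apply H; now left| apply IH; intros; apply H; now right].
Qed.

Definition S {A} (l : list A) (F : A -> R) := fold_right (fun a acc => F a + acc) 0 l.
Lemma S_cons {A} (a : A) l F : S (a :: l) F = F a + S l F.
Proof. reflexivity. Qed.
Lemma S_nil {A} F : S (@nil A) F = 0.
Proof. reflexivity. Qed.

Lemma S_scal {A} (l : list A) F c : S l (fun a => c * F a) = c * S l F.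
Proof. induction l; rewrite ?S_nil, ?S_cons; [ring| rewrite ?S_nil, ?S_cons; rewrite IHl; ring]. Qed.

Lemma S_le {A} (l : list A) F G : (forall a, In a l -> F a <= G a) -> S l F <= S l G.
Proof.
  induction l; intros H; rewrite ?S_nil, ?S_cons; [lra|]. rewrite ?S_nil, ?S_cons.
  apply Rplus_le_compat; [apply H; now left| apply IHl; intros; apply H; now right].
Qed.

Lemma S_nonneg {A} (l : list A) F : (forall a, In a l -> 0 <= F a) -> 0 <= S l F.
Proof.
  induction l; intros H; rewrite ?S_nil, ?S_cons; [lra|]. rewrite ?S_nil, ?S_cons.
  assert (0 <= F a) by (apply H; now left).
  assert (0 <= S l F) by (apply IHl; intros; apply H; now right).
  lra.
Qed.

Lemma S_zero {A} (l : list A) F : (forall a, In a l -> F a = 0) -> S l F = 0.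
Proof.
  induction l; intros H; rewrite ?S_nil, ?S_cons; [lra|]. rewrite ?S_nil, ?S_cons.
  rewrite H by now left. rewrite IHl by (intros; apply H; now right). ring.
Qed.

Lemma eqRb_spec x y : eqRb x y = true <-> x = y.
Proof. unfold eqRb; destruct (Req_EM_T x y); split; congruence. Qed.

Lemma myB1 (V : list R) (b : R -> bool) x : NoDup V ->
  (forall v, In v V -> b v = true -> v = x) -> 0 <= x ->
  S V (fun v => if b v then v else 0) <= x.
Proof.
  induction V as [|v V IH]; intros ND H Hx; rewrite ?S_nil, ?S_cons; [lra|].
  inversion ND; subst.
  destruct (b v) eqn:E.
  - assert (v = x) by (apply H; auto; now left). subst.
    rewrite (S_zero V (fun v => if b v then v else 0)); [lra|].
    intros a Ha. destruct (b a) eqn:E2; auto.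
    assert (a = x) by (apply H; auto; now right). subst. contradiction.
  - assert (S V (fun a => if b a then a else 0) <= x); [|lra].
    apply IH; auto. intros; apply H; auto; now right.
Qed.

Lemma myB2 (V : list R) x : In x V -> (forall v, In v V -> 0 <= v) ->
  x <= S V (fun v => if eqRb x v then v else 0).
Proof.
  induction V as [|v V IH]; intros Hin H; [destruct Hin|]. rewrite ?S_nil, ?S_cons.
  destruct Hin as [Hv|Hin]; [subst v|].
  - assert (eqRb x x = true) by (now apply eqRb_spec). rewrite H0.
    assert (0 <= S V (fun v => if eqRb x v then v else 0)).
    { apply S_nonneg. intros a Ha. destruct (eqRb x a); [apply H; now right|lra]. }
    lra.
  - assert (x <= S V (fun a => if eqRb x a then a else 0))
      by (apply IH; auto; intros; apply H; now right).
    assert (0 <= if eqRb x v then v else 0) by (destruct (eqRb x v); [apply H; now left|lra]).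
    lra.
Qed.

Lemma S_single (l : list nat) F k : NoDup l -> (forall j, In j l -> j <> k -> F j = 0) ->
  S l F <= Rmax (F k) 0.
Proof.
  induction l as [|a l IH]; intros ND H; rewrite ?S_nil, ?S_cons.
  - apply Rmax_r.
  - inversion ND; subst. destruct (Nat.eq_dec a k).
    + subst. rewrite (S_zero l F); [generalize (Rmax_l (F k) 0); lra|].
      intros j Hj; apply H; [now right|]. intro; subst; contradiction.
    + rewrite H by (auto; now left). 
      assert (S l F <= Rmax (F k) 0)
        by (apply IH; auto; intros; apply H; auto; now right). lra.
Qed.

Lemma fmax_ge0 (f : nat -> R) l : 0 <= fold_right Rmax 0 (map f l).
Proof. induction l; simpl; [lra| eapply Rle_trans; [exact IHl| apply Rmax_r]]. Qed.

Lemma fmax_ge (f : nat -> R) l j : In j l -> f j <= fold_right Rmax 0 (map f l).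
Proof.
  induction l; simpl; intros Hin; [destruct Hin|]; destruct Hin as [->|H]; [apply Rmax_l|].
  eapply Rle_trans; [apply IHl; auto| apply Rmax_r].
Qed.

Lemma prod_swap (f g : nat -> R) l j : NoDup l -> In j l -> (forall i, i <> j -> f i = g i) ->
  fold_right Rmult 1 (map f l) * g j = fold_right Rmult 1 (map g l) * f j.
Proof.
  induction l as [|a l IH]; intros ND Hin H; [destruct Hin|]. inversion ND; subst; simpl.
  destruct Hin as [<-|Hin].
  - assert (E : map f l = map g l).
    { apply map_ext_in. intros i Hi. apply H. intro; subst; contradiction. }
    rewrite E; ring.
  - assert (a <> j) by (intro; subst; contradiction).
    rewrite H by auto. rewrite Rmult_assoc, IH by auto. ring.
Qed.

Lemma S_fac {A} (l : list A) F c : S l (fun a => F a * c) = S l F * c.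
Proof. induction l; rewrite ?S_nil, ?S_cons; [ring| rewrite ?S_nil, ?S_cons; rewrite IHl; ring]. Qed.

Lemma prob_sig p (Hp : is_pmf p) (A : nat -> bool) : {r | is_prob p A r}.
Proof.
  apply (Rseries_CV_comp (fun n => if A n then p n else 0) p).
  - intro n; destruct (A n); generalize (proj1 Hp n); lra.
  - exists 1; exact (proj2 Hp).
Qed.

Lemma prob_bounds p A r : is_pmf p -> is_prob p A r -> 0 <= r <= 1.
Proof.
  intros [H0 H1] Hr; split.
  - refine (is_le _ _ _ _ _ is_zero Hr). intro n; destruct (A n); [apply H0|lra].
  - refine (is_le _ _ _ _ _ Hr H1). intro n; destruct (A n); [lra|apply H0].
Qed.

Lemma S_ext {A} (l : list A) F G : (forall a, F a = G a) -> S l F = S l G.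
Proof. intros H; unfold S; induction l; simpl; [reflexivity| rewrite H, IHl; reflexivity]. Qed.

Lemma forallb_ex {A} (f : A -> bool) l : forallb f l = false -> exists x, In x l /\ f x = false.
Proof.
  induction l; simpl; [discriminate|]. destruct (f a) eqn:E; simpl.
  - intros H; destruct (IHl H) as [x [? ?]]; exists x; auto.
  - intros _; exists a; auto.
Qed.

Lemma forallb_fa {A} (f : A -> bool) l x : In x l -> f x = false -> forallb f l = false.
Proof.
  intros Hin Hf. destruct (forallb f l) eqn:E; auto.
  rewrite forallb_forall in E. rewrite E in Hf by auto. discriminate.
Qed.

Lemma lim_le f e B : infinite_sum f e -> (forall N, sum_f_R0 f N <= B) -> e <= B.
Proof.
  intros He HB. destruct (Rle_lt_dec e B) as [|Hlt]; auto.
  destruct (He (e - B) ltac:(lra)) as [N HN]. specialize (HN N (le_n _)).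
  specialize (HB N). unfold Rdist in HN. apply Rabs_def2 in HN. lra.
Qed.

Lemma esum_lem (E : nat -> ereal) (B : nat -> R) l :
  (forall j, In j l -> exists e, E j = EFin e /\ e <= B j) ->
  exists s, fold_right eadd (EFin 0) (map E l) = EFin s /\ s <= S l B.
Proof.
  induction l as [|a l IH]; intros H; simpl.
  - exists 0; split; auto. cbn; lra.
  - destruct (H a (or_introl eq_refl)) as [e [-> He]].
    destruct IH as [s [-> Hs]]; [intros; apply H; now right|].
    exists (e + s); split; [reflexivity|]. unfold S in *; simpl in *; lra.
Qed.

Definition ind (b : bool) : R := if b then 1 else 0.

Theorem mainTheorem3 (L : R) (t : nat) (p : nat -> R) (X : nat -> nat -> R)
  (E : nat -> ereal) :
  0 < L ->
  is_pmf p ->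
  independent p t X ->
  (forall j n, (j < t)%nat -> 0 < p n -> 0 <= X j n) ->
  (forall j n, (j < t)%nat -> 0 < p n -> X j n = 0 \/ L <= X j n) ->
  (forall j, (j < t)%nat -> is_expect p (X j) (E j)) ->
  ele L (esum t E) ->
  forall Emax, is_expect p (maxX t X) Emax -> ele (L / 2) Emax.
Proof.
  intros HL Hp Hind Hnn H0L HE Hsum Emax HEmax.
  destruct Emax as [r|]; [|exact I]. simpl. simpl in HEmax.
  assert (Hp0 : forall n, 0 <= p n) by apply (proj1 Hp).
  pose (Z0 := fun n => forallb (fun i => eqRb (X i n) 0) (seq 0 t)).
  destruct (prob_sig p Hp Z0) as [P0 HP0].
  pose (q := fun i => proj1_sig (prob_sig p Hp (fun n => eqRb (X i n) 0))).
  assert (HP0prod : P0 = fold_right Rmult 1 (map q (seq 0 t))).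
  { apply (Hind (fun _ => 0) P0 q HP0). intros j _. exact (proj2_sig (prob_sig p Hp _)). }
  assert (Hmax0 : forall n, 0 <= maxX t X n) by (intro; apply fmax_ge0).
  assert (Hmaxj : forall j n, (j < t)%nat -> X j n <= maxX t X n).
  { intros j n Hj. apply (fmax_ge (fun j => X j n)). apply in_seq; lia. }
  destruct (Rle_lt_dec P0 (1/2)) as [Hc1|Hc2].
  -
    assert (Hs : infinite_sum (fun n => L * (p n + -1 * (if Z0 n then p n else 0))) (L * (1 + -1 * P0))).
    { apply is_scal. apply is_plus; [exact (proj2 Hp)| apply is_scal; exact HP0]. }
    assert (L * (1 + -1 * P0) <= r).
    { refine (is_le _ _ _ _ _ Hs HEmax). intro n.
      destruct (Hp0 n) as [Hpn|Hpn].
      - destruct (Z0 n) eqn:Ez.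
        + generalize (Hmax0 n); intros; nra.
        + destruct (forallb_ex _ _ Ez) as [i [Hi Hf]]. apply in_seq in Hi.
          assert (X i n <> 0) by (intro Hx; apply eqRb_spec in Hx; congruence).
          assert (L <= X i n) by (destruct (H0L i n ltac:(lia) Hpn); [contradiction|auto]).
          generalize (Hmaxj i n ltac:(lia)); intros; nra.
      - rewrite <- Hpn. destruct (Z0 n); rewrite <- ?Hpn; nra. }
    nra.
  -
    pose (Zj := fun j n => forallb (fun i => (Nat.eqb i j || eqRb (X i n) 0)%bool) (seq 0 t)).
    pose (T := fun j n => p n * (X j n * ind (Zj j n))).
    assert (Hind01 : forall b, 0 <= ind b <= 1) by (intro b; destruct b; simpl; lra).
    assert (HTle : forall j n, (j < t)%nat -> 0 <= T j n <= p n * maxX t X n).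
    { intros j n Hj. unfold T. destruct (Hp0 n) as [Hpn|Hpn].
      - generalize (Hnn j n Hj Hpn) (Hmaxj j n Hj) (Hind01 (Zj j n)); intros.
        assert (0 <= X j n * ind (Zj j n) <= maxX t X n) by (split; nra).
        split; [apply Rmult_le_pos; lra| apply Rmult_le_compat_l; lra].
      - rewrite <- Hpn. split; lra. }
    assert (HAex : forall j, exists a, (j < t)%nat -> infinite_sum (T j) a).
    { intro j. destruct (Compare_dec.lt_dec j t) as [Hj|Hj].
      - destruct (is_comp (T j) _ _ (fun n => HTle j n Hj) HEmax) as [a Ha]. exists a; auto.
      - exists 0; intros; lia. }
    pose (A := fun j => proj1_sig (constructive_indefinite_description _ (HAex j))).
    assert (HA : forall j, (j < t)%nat -> infinite_sum (T j) (A j)).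
    { intro j. exact (proj2_sig (constructive_indefinite_description _ (HAex j))). }
    assert (HA0 : forall j, (j < t)%nat -> 0 <= A j).
    { intros j Hj. refine (is_le _ _ _ _ _ is_zero (HA j Hj)). intro n; apply HTle; auto. }
    assert (HSA : S (seq 0 t) A <= r).
    { assert (Hl := is_list (seq 0 t) T A (fun j Hj => HA j ltac:(apply in_seq in Hj; lia))).
      refine (is_le _ _ _ _ _ Hl HEmax). intro n.
      change (S (seq 0 t) (fun j => p n * (X j n * ind (Zj j n))) <= p n * maxX t X n).
      rewrite S_scal. destruct (Hp0 n) as [Hpn|Hpn]; [|rewrite <- Hpn; lra].
      apply Rmult_le_compat_l; [lra|].
      destruct (classic (exists k, (k < t)%nat /\ X k n <> 0)) as [[k [Hk Hxk]]|Hno].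
      - eapply Rle_trans; [apply (S_single _ _ k (seq_NoDup t 0))|].
        + intros j Hj Hjk. apply in_seq in Hj.
          assert (Zj j n = false).
          { apply (forallb_fa _ _ k); [apply in_seq; lia|].
            apply Bool.orb_false_iff; split; [apply Nat.eqb_neq; auto|].
            destruct (eqRb (X k n) 0) eqn:Ee; auto. apply eqRb_spec in Ee; contradiction. }
          rewrite H; simpl; ring.
        + apply Rmax_lub; auto.
          generalize (Hnn k n Hk Hpn) (Hmaxj k n Hk) (Hind01 (Zj k n)); intros; nra.
      - rewrite S_zero; auto. intros j Hj. apply in_seq in Hj.
        destruct (Req_dec (X j n) 0) as [->|Hne]; [ring|].
        exfalso; apply Hno; exists j; split; [lia|auto]. }
    assert (Hkey : forall j N, (j < t)%nat -> sum_f_R0 (fun n => p n * X j n) N * P0 <= A j).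
    { intros j N Hj.
      pose (V := nodup Req_EM_T (map (fun n => Rmax 0 (X j n)) (seq 0 (Nat.succ N)))).
      assert (Vnn : forall v, In v V -> 0 <= v).
      { intros v Hv. apply nodup_In, in_map_iff in Hv. destruct Hv as [n [<- _]]. apply Rmax_l. }
      assert (VND : NoDup V) by apply NoDup_nodup.
      pose (pv := fun v => proj1_sig (prob_sig p Hp (fun n => eqRb (X j n) v))).
      pose (av := fun v i => if Nat.eqb i j then v else 0).
      pose (Ev := fun v n => forallb (fun i => eqRb (X i n) (av v i)) (seq 0 t)).
      pose (pe := fun v => proj1_sig (prob_sig p Hp (Ev v))).
      assert (Key1 : forall v, P0 * pv v <= pe v).
      { intro v.
        pose (rs := fun i => if Nat.eqb i j then pv v else q i).
        assert (Hpe : pe v = fold_right Rmult 1 (map rs (seq 0 t))).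
        { apply (Hind (av v) (pe v) rs (proj2_sig (prob_sig p Hp (Ev v)))).
          intros i Hi. unfold rs, av. destruct (Nat.eqb i j) eqn:Eij.
          - apply Nat.eqb_eq in Eij; subst i. exact (proj2_sig (prob_sig p Hp _)).
          - exact (proj2_sig (prob_sig p Hp _)). }
        assert (Hsw := prod_swap rs q (seq 0 t) j (seq_NoDup t 0) ltac:(apply in_seq; lia)).
        assert (Hsw' : fold_right Rmult 1 (map rs (seq 0 t)) * q j =
                       fold_right Rmult 1 (map q (seq 0 t)) * rs j).
        { apply Hsw. intros i Hij. unfold rs. apply Nat.eqb_neq in Hij. rewrite Hij; auto. }
        replace (rs j) with (pv v) in Hsw' by (unfold rs; now rewrite Nat.eqb_refl).
        rewrite <- Hpe, <- HP0prod in Hsw'.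
        assert (0 <= pe v <= 1) by (apply (prob_bounds p (Ev v)); auto; exact (proj2_sig (prob_sig p Hp _))).
        assert (0 <= q j <= 1) by (apply (prob_bounds p (fun n => eqRb (X j n) 0)); auto; exact (proj2_sig (prob_sig p Hp _))).
        nra. }
      pose (g := fun n => S V (fun v => if eqRb (X j n) v then v else 0)).
      pose (G := S V (fun v => v * pv v)).
      assert (IG : infinite_sum (fun n => p n * g n) G).
      { assert (Hl := is_list V (fun v n => v * (if eqRb (X j n) v then p n else 0)) (fun v => v * pv v)
           (fun v _ => is_scal _ _ v (proj2_sig (prob_sig p Hp (fun n => eqRb (X j n) v))))).
        refine (is_ext _ _ _ _ Hl). intro n. unfold g. rewrite <- S_scal.
        apply S_ext. intro v. destruct (eqRb (X j n) v); ring. }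
      assert (Hg0 : forall n, 0 <= g n).
      { intro n. apply S_nonneg. intros v Hv. destruct (eqRb (X j n) v); auto; lra. }
      assert (Sa : sum_f_R0 (fun n => p n * X j n) N <= sum_f_R0 (fun n => p n * g n) N).
      { apply sum_Rle. intros n Hn. destruct (Hp0 n) as [Hpn|Hpn]; [|rewrite <- Hpn; lra].
        apply Rmult_le_compat_l; [lra|]. apply myB2; auto.
        apply nodup_In, in_map_iff. exists n; split.
        - apply Rmax_right. apply Hnn; auto.
        - apply in_seq. split; [apply Nat.le_0_l| simpl; apply le_n_S; exact Hn]. }
      assert (Sb : sum_f_R0 (fun n => p n * g n) N <= G).
      { apply is_partial; auto. intro n; generalize (Hp0 n) (Hg0 n); nra. }
      pose (H := S V (fun v => v * pe v)).
      assert (Sc : P0 * G <= H).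
      { unfold G, H. rewrite <- S_scal. apply S_le. intros v Hv.
        generalize (Key1 v) (Vnn v Hv); intros; nra. }
      assert (IH : infinite_sum (fun n => p n * S V (fun v => if Ev v n then v else 0)) H).
      { assert (Hl := is_list V (fun v n => v * (if Ev v n then p n else 0)) (fun v => v * pe v)
           (fun v _ => is_scal _ _ v (proj2_sig (prob_sig p Hp (Ev v))))).
        refine (is_ext _ _ _ _ Hl). intro n. rewrite <- S_scal.
        apply S_ext. intro v. destruct (Ev v n); ring. }
      assert (Sd : H <= A j).
      { refine (is_le _ _ _ _ _ IH (HA j Hj)). intro n. unfold T.
        destruct (Hp0 n) as [Hpn|Hpn]; [|rewrite <- Hpn; lra].
        apply Rmult_le_compat_l; [lra|]. refine (myB1 V (fun v => Ev v n) _ VND _ _); cbv beta.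
        - intros v Hv Hev. unfold Ev in Hev. rewrite forallb_forall in Hev.
          assert (Hxj : X j n = v).
          { apply eqRb_spec. assert (Hh := Hev j ltac:(apply in_seq; lia)).
            unfold av in Hh. rewrite Nat.eqb_refl in Hh. exact Hh. }
          assert (Zj j n = true).
          { apply forallb_forall. intros i Hi. destruct (Nat.eqb i j) eqn:Eij; auto.
            simpl. assert (Hh := Hev i Hi). unfold av in Hh. rewrite Eij in Hh. exact Hh. }
          rewrite H0; simpl. lra.
        - generalize (Hnn j n Hj Hpn) (Hind01 (Zj j n)); intros; nra. }
      nra. }
    assert (HEj : forall j, In j (seq 0 t) -> exists e, E j = EFin e /\ e <= 2 * A j).
    { intros j Hj. apply in_seq in Hj. assert (Hj' : (j < t)%nat) by lia.
      assert (HE' := HE j Hj'). assert (HA0j := HA0 j Hj').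
      destruct (E j) as [e|].
      - exists e; split; auto.
        assert (e <= A j / P0).
        { apply (lim_le _ _ _ HE'). intro N. apply (Rmult_le_reg_r P0); [lra|].
          unfold Rdiv. rewrite Rmult_assoc, Rinv_l by lra. rewrite Rmult_1_r. apply Hkey; auto. }
        assert (A j / P0 <= 2 * A j).
        { apply (Rmult_le_reg_r P0); [lra|]. unfold Rdiv. rewrite Rmult_assoc, Rinv_l by lra. nra. }
        lra.
      - exfalso. destruct (HE' (A j / P0)) as [N HN].
        assert (Hk := Hkey j N Hj').
        assert (A j / P0 * P0 = A j) by (field; lra). nra. }
    destruct (esum_lem E (fun j => 2 * A j) (seq 0 t) HEj) as [s [Hs Hsle]].
    unfold esum in Hsum. rewrite Hs in Hsum. simpl in Hsum.
    rewrite S_scal in Hsle. lra.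
Qed.
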